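(* Let $m\ge1$ and let $G$ be a strongly regular graph with parameters $P_+(m)$ or $P_-(m)$ and 2-rank $r$. Let $x$ be a vertex of $G$ and let $G'$ be obtained from $G$ by Seidel switching with respect to the set of neighbours of $x$, and let $G''$ be $G'$ with the (isolated) vertex $x$ deleted. Then $G''$ has 2-rank $r-2$ if $\mathbf{1}\in\mathrm{Col}_2(G)$, and 2-rank $r$ otherwise. (When $G''$ is strongly regular with parameters $P_0(m)$, this yields an SRG with parameters $P_0(m)$ of 2-rank $r-2$ or $r$ accordingly.)
   Context: $P_0(m)=(2^{2m}-1,2^{2m-1},2^{2m-2},2^{2m-2})$, $P_\pm(m)=(2^{2m},2^{2m-1}\pm2^{m-1},2^{2m-2}\pm2^{m-1},2^{2m-2}\pm2^{m-1})$. The 2-rank of a graph is the rank over $\mathbb{F}_2$ of its adjacency matrix; $\mathrm{Col}_2(G)$ is the $\mathbb{F}_2$-column space of the adjacency matrix of $G$, and $\mathbf{1}$ is the all-ones vector. Seidel switching with respect to a vertex set $X$ removes all edges between $X$ and its complement and adds all previously absent edges between $X$ and its complement, leaving other adjacencies unchanged. *)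

(* Defs.v *)
From HB Require Import structures.
From mathcomp Require Import all_boot all_order all_algebra.
Set Implicit Arguments. Unset Strict Implicit. Unset Printing Implicit Defensive.
Import GRing.Theory.

Definition simple_graph (T : finType) (e : rel T) : Prop :=
  irreflexive e /\ symmetric e.

Definition srg (T : finType) (e : rel T) (p : nat * nat * nat * nat) : Prop :=
  let: (v, k, l, mu) := p in
  [/\ simple_graph e,
      #|T| = v,
      forall x : T, #|[set y | e x y]| = k,
      forall x y : T, x != y -> e x y -> #|[set z | e x z && e y z]| = l
    & forall x y : T, x != y -> ~~ e x y -> #|[set z | e x z && e y z]| = mu].

Definition P0 (m : nat) : nat * nat * nat * nat :=
  (2 ^ (2 * m) - 1, 2 ^ (2 * m - 1), 2 ^ (2 * m - 2), 2 ^ (2 * m - 2)).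
Definition Pplus (m : nat) : nat * nat * nat * nat :=
  (2 ^ (2 * m), 2 ^ (2 * m - 1) + 2 ^ (m - 1),
   2 ^ (2 * m - 2) + 2 ^ (m - 1), 2 ^ (2 * m - 2) + 2 ^ (m - 1)).
Definition Pminus (m : nat) : nat * nat * nat * nat :=
  (2 ^ (2 * m), 2 ^ (2 * m - 1) - 2 ^ (m - 1),
   2 ^ (2 * m - 2) - 2 ^ (m - 1), 2 ^ (2 * m - 2) - 2 ^ (m - 1)).

Definition adjmx2 (T : finType) (e : rel T) : 'M['F_2]_#|T| :=
  \matrix_(i, j) ((e (enum_val i) (enum_val j))%:R)%R.

Definition rank2 (T : finType) (e : rel T) : nat := \rank (adjmx2 e).

(* The all-ones vector lies in the F_2-column space of the adjacency matrix
   (column space of A = row space of A^T). *)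
Definition ones_in_col2 (T : finType) (e : rel T) : bool :=
  submx (const_mx 1%R : 'rV['F_2]_#|T|) (trmx (adjmx2 e)).

Definition seidel (T : finType) (e : rel T) (X : {set T}) : rel T :=
  fun y z => if (y \in X) != (z \in X) then ~~ e y z else e y z.

Definition nbhd (T : finType) (e : rel T) (x : T) : {set T} := [set y | e x y].

Definition delete_vertex (T : finType) (e : rel T) (x : T) : rel {y : T | y != x} :=
  fun y z => e (val y) (val z).
Arguments delete_vertex {T} e x.

(* Main.v *)
Require Import Defs.
From mathcomp Require Import all_boot all_order all_algebra.
From mathcomp Require Import zify.
Import GRing.Theory.
Local Open Scope ring_scope.

Lemma f2add (x : 'F_2) : x + x = 0.
Proof. exact: addrr_pchar2 (pchar_Fp (isT : prime 2)) x. Qed.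
Lemma f2b (x : 'F_2) : x = 0 \/ x = 1.
Proof. case: x => [[|[|n]]] Hn. by left; apply: val_inj. by right; apply: val_inj. by []. Qed.

Lemma mxadd2 p q (X : 'M['F_2]_(p, q)) : X + X = 0.
Proof. by apply/matrixP => i j; rewrite !mxE f2add. Qed.

Lemma mx11 (X Y : 'M['F_2]_1) : X 0 0 = Y 0 0 -> X = Y.
Proof. by move=> H; apply/matrixP => i j; rewrite (ord1 i) (ord1 j). Qed.

Lemma mx11_tr (X : 'M['F_2]_1) : X^T = X.
Proof. by apply: mx11; rewrite mxE. Qed.

Lemma mx11_nz (X : 'M['F_2]_1) : X != 0 -> X = 1%:M.
Proof.
move=> HX; apply: mx11; rewrite mxE /=.
case: (f2b (X 0 0)) => // H; case/eqP: HX; apply: mx11; by rewrite H mxE.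
Qed.

Lemma qform0 n (A : 'M['F_2]_n) (v : 'rV['F_2]_n) :
  A^T = A -> (forall i, A i i = 0) -> v *m A *m v^T = 0.
Proof.
move=> sA dA.
pose U := \matrix_(i, j) (if (i < j)%N then A i j else 0).
have AU : A = U + U^T.
  apply/matrixP => i j; rewrite !mxE.
  case: (ltngtP i j) => Hij.
  - by rewrite addr0.
  - by rewrite add0r -[A in LHS]sA mxE.
  - have -> : i = j by apply: val_inj.
    by rewrite dA addr0.
rewrite AU mulmxDr mulmxDl.
set s := v *m U *m v^T.
have -> : v *m U^T *m v^T = s^T by rewrite /s !trmx_mul trmxK mulmxA.
by rewrite mx11_tr mxadd2.
Qed.

Lemma mxadd2' p q (X Y Z : 'M['F_2]_(p, q)) : X = X + Y + Z + Y + Z.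
Proof.
by rewrite -!addrA (addrCA Z) mxadd2 addr0 mxadd2 addr0.
Qed.
Section Core.
Variables (n : nat) (A : 'M['F_2]_n) (i0 : 'I_n).
Hypotheses (sA : A^T = A) (dA : forall i, A i i = 0) (nzA : row i0 A != 0).
Let a := row i0 A.
Let o := (const_mx 1 : 'rV['F_2]_n).
Let e := (delta_mx 0 i0 : 'rV['F_2]_n).

Lemma aE : a = e *m A. Proof. exact: rowE. Qed.
Lemma aT : a^T = A *m e^T. Proof. by rewrite aE trmx_mul sA. Qed.
Lemma ae : a *m e^T = 0.
Proof. by apply: mx11; rewrite trmx_delta -colE !mxE dA. Qed.
Lemma oe : o *m e^T = 1%:M.
Proof. by apply: mx11; rewrite trmx_delta -colE !mxE. Qed.
Lemma eo : e *m o^T = 1%:M.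
Proof. by rewrite -[e]trmxK -trmx_mul oe trmx1. Qed.

Lemma core_notin : ~~ (o <= A)%MS ->
  \rank (A + a^T *m o + o^T *m a)%R = \rank A.
Proof.
rewrite submxE => Hc.
set X := o *m cokermx A.
have [j Hj] : exists j, col j X != 0.
  apply/existsP; apply: contraR Hc; rewrite negb_exists => /forallP H.
  apply/eqP/matrixP => i k; move: (H k); rewrite negbK => /eqP/matrixP/(_ i 0).
  by rewrite !mxE.
pose c := col j (cokermx A).
have Ac : A *m c = 0 by rewrite /c colE mulmxA mulmx_coker mul0mx.
have oc : o *m c = 1%:M by apply: mx11_nz; rewrite /c colE mulmxA -colE.
pose N := 1%:M + e^T *m o.
pose P := 1%:M + c *m o.
have H1 : A + a^T *m o + o^T *m a = N^T *m A *m N.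
  have NT : N^T = 1%:M + o^T *m e.
    by rewrite /N (raddfD (@trmx _ n n)) /= tr_scalar_mx trmx_mul trmxK.
  rewrite NT /N.
  rewrite mulmxDl mul1mx -mulmxA -aE mulmxDr mulmx1 !mulmxDl.
  rewrite mulmxA -aT [o^T *m a *m _]mulmxA -[o^T *m a *m e^T]mulmxA ae.
  by rewrite mulmx0 mul0mx addr0 addrAC.
have AN : A *m N = A + a^T *m o by rewrite /N mulmxDr mulmx1 mulmxA aT.
have H2 : A *m N *m P = A.
  rewrite AN /P mulmxDr mulmx1 !mulmxDl.
  rewrite mulmxA Ac mul0mx add0r -mulmxA [o *m _]mulmxA oc mul1mx.
  by rewrite -addrA mxadd2 addr0.
have H3 : P^T *m (A + a^T *m o + o^T *m a) *m P = A.
  have H2' : A *m (N *m P) = A by rewrite mulmxA.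
  rewrite H1 -!mulmxA H2' mulmxA -trmx_mul.
  by rewrite -{1}sA -trmx_mul H2' sA.
apply/eqP; rewrite eqn_leq; apply/andP; split.
  by rewrite H1 (leq_trans (mxrankM_maxl _ _)) // mxrankM_maxr.
by rewrite -{1}H3 (leq_trans (mxrankM_maxl _ _)) // mxrankM_maxr.
Qed.

Lemma core_in : (o <= A)%MS ->
  \rank (A + a^T *m o + o^T *m a)%R = (\rank A - 2)%N.
Proof.
case/submxP => u ou.
have Au : A *m u^T = o^T by rewrite -[A]sA -trmx_mul ou.
pose M := 1%:M + e^T *m o + u^T *m a.
have AM : A *m M = A + a^T *m o + o^T *m a.
  by rewrite /M !mulmxDr mulmx1 !mulmxA -aT Au.
have au : a *m u^T = 1%:M by rewrite aE -mulmxA Au eo.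
have ou0 : o *m u^T = 0 by rewrite ou qform0.
pose X := col_mx a o.
have XA : (X <= A)%MS by rewrite col_mx_sub row_sub ou submxMl.
have XK : (X <= kermx M)%MS.
  rewrite sub_kermx mul_col_mx /M !mulmxDr !mulmx1 !mulmxA ae au ou0 oe.
  by rewrite !mul0mx !mul1mx addr0 mxadd2 addr0 mxadd2 col_mx0.
have [y Hy] : exists y, A i0 y != 0.
  apply/existsP; apply: contraR nzA; rewrite negb_exists => /forallP H.
  apply/eqP/matrixP => i k; move: (H k); rewrite negbK => /eqP.
  by rewrite !mxE.
have Ay : A i0 y = 1 by case: (f2b (A i0 y)) Hy => -> //; rewrite eqxx.
pose C := row_mx (delta_mx y 0 + delta_mx i0 0) (delta_mx i0 0) : 'M['F_2]_(n, 1 + 1).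
have XC : X *m C = 1%:M.
  rewrite mul_col_row !mulmxDr -!colE (scalar_mx_block 1 1 1).
  have c1 : col y a = 1%:M by apply: mx11; rewrite !mxE Ay.
  have c2 : col i0 a = 0 by apply: mx11; rewrite !mxE dA.
  have c3 : forall k, col k o = 1%:M by move=> k; apply: mx11; rewrite !mxE.
  by rewrite c1 c2 !c3 addr0 mxadd2.
have r2 : (2 <= \rank (A :&: kermx M))%N.
  apply: (@leq_trans (\rank X)); last by apply: mxrankS; rewrite sub_capmx XA.
  by rewrite -{1}(mxrank1 'F_2 2) -XC mxrankM_maxl.
have lo : (\rank A <= \rank (A + a^T *m o + o^T *m a)%R + 2)%N.
  set A' := (A + a^T *m o + o^T *m a)%R.
  have -> : A = (A' + a^T *m o + o^T *m a)%R by exact: mxadd2'.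
  have rb : (\rank (a^T *m o) <= 1)%N := leq_trans (mxrankM_maxr _ _) (rank_leq_row o).
  have rc : (\rank (o^T *m a) <= 1)%N := leq_trans (mxrankM_maxr _ _) (rank_leq_row a).
  apply: (leq_trans (mxrank_add _ _)).
  apply: (leq_trans (leq_add (leq_trans (mxrank_add _ _) (leq_add (leqnn _) rb)) rc)).
  by rewrite -addnA.
have := mxrank_mul_ker A M; rewrite AM => H.
lia.
Qed.
End Core.
Lemma f4 (b : bool) : (~~ b)%:R = 1 + b%:R :> 'F_2. Proof. by case: b; apply/eqP. Qed.

Lemma seidel_mx (T : finType) (e : rel T) (x : T) :
  let A := adjmx2 e in let a := row (enum_rank x) A in
  let o := (const_mx 1 : 'rV['F_2]_#|T|) in
  adjmx2 (seidel e (nbhd e x)) = (A + a^T *m o + o^T *m a)%R.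
Proof.
move=> A a o; apply/matrixP => p q; rewrite !mxE !big_ord1 !mxE enum_rankK.
rewrite /seidel /nbhd !inE.
by case: (e x (enum_val p)); case: (e x (enum_val q)); case: (e _ _); apply/eqP.
Qed.

Lemma rowsub_rank m m' n (B : 'M['F_2]_(m, n)) (f : 'I_m' -> 'I_m) (i0 : 'I_m) :
  row i0 B = 0 -> (forall i, i != i0 -> exists j, f j = i) ->
  \rank (rowsub f B) = \rank B.
Proof.
move=> B0 Hf; apply/eqP; rewrite eqn_leq; apply/andP; split.
  by rewrite rowsubE mxrankM_maxr.
apply: mxrankS; apply/row_subP => i.
case: (eqVneq i i0) => [->|/Hf [j <-]]; first by rewrite B0 sub0mx.
by rewrite -row_rowsub row_sub.
Qed.

Lemma del_rank (T : finType) (e : rel T) (x : T) :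
  (forall z, e x z = false) -> (forall z, e z x = false) ->
  rank2 (delete_vertex e x) = rank2 e.
Proof.
move=> Hx1 Hx2.
pose f := fun i : 'I_#|{: {y : T | y != x}}| => enum_rank (val (enum_val i)).
have E : adjmx2 (delete_vertex e x) = colsub f (rowsub f (adjmx2 e)).
  by apply/matrixP => i j; rewrite !mxE !enum_rankK.
have Hf : forall i, i != enum_rank x -> exists j, f j = i.
  move=> i Hi.
  have Hv : enum_val i != x by apply: contra Hi => /eqP <-; rewrite enum_valK.
  exists (enum_rank (exist (fun y => y != x) (enum_val i) Hv)).
  by rewrite /f enum_rankK /= enum_valK.
rewrite /rank2 E -mxrank_tr.
have -> : (colsub f (rowsub f (adjmx2 e)))^T = rowsub f (rowsub f (adjmx2 e))^T.
  by apply/matrixP => i j; rewrite !mxE.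
rewrite (@rowsub_rank _ _ _ _ _ (enum_rank x)) //; last first.
  by apply/matrixP => i j; rewrite !mxE !enum_rankK Hx2.
rewrite mxrank_tr (@rowsub_rank _ _ _ _ _ (enum_rank x)) //.
by apply/matrixP => i j; rewrite !mxE !enum_rankK Hx1.
Qed.

Local Close Scope ring_scope.
Theorem mainTheorem8 (m : nat) (T : finType) (e : rel T) (x : T) :
  1 <= m ->
  srg e (Pplus m) \/ srg e (Pminus m) ->
  rank2 (delete_vertex (seidel e (nbhd e x)) x) =
    (if ones_in_col2 e then rank2 e - 2 else rank2 e).
Proof.
move=> m1 Hsrg.
have [[irr sym] [y exy]] : simple_graph e /\ exists y, e x y.
  have P1 : (0 < 2 ^ (2 * m - 1) + 2 ^ (m - 1))%N by rewrite addn_gt0 expn_gt0.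
  have P2 : (0 < 2 ^ (2 * m - 1) - 2 ^ (m - 1))%N.
    by rewrite subn_gt0 ltn_exp2l //; lia.
  case: Hsrg => H; move: H; rewrite /srg /= => -[sg _ Hk _ _]; split => //.
    have : (0 < #|[set z | e x z]|)%N by rewrite Hk.
    by case/card_gt0P => z; rewrite inE => ?; exists z.
  have : (0 < #|[set z | e x z]|)%N by rewrite Hk.
  by case/card_gt0P => z; rewrite inE => ?; exists z.
rewrite del_rank; first last.
- by move=> z; rewrite /seidel /nbhd !inE irr ?(sym z x); case: (e x z).
- by move=> z; rewrite /seidel /nbhd !inE irr ?(sym z x); case: (e x z).
rewrite /rank2 seidel_mx /ones_in_col2.
have sA : trmx (adjmx2 e) = adjmx2 e by apply/matrixP => i j; rewrite !mxE sym.
have dA : forall i, adjmx2 e i i = 0%R by move=> i; rewrite mxE irr.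
have nzA : row (enum_rank x) (adjmx2 e) != 0%R.
  apply/negP => /eqP/matrixP/(_ ord0 (enum_rank y)); rewrite !mxE !enum_rankK exy.
  by [].
rewrite sA; case: ifP => H.
  exact: core_in.
by apply: core_notin => //; rewrite H.
Qed.
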